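(* Let $G:\mathbb{R}^k\to\mathbb{R}^n$ and $G^\dagger:\mathbb{R}^n\to\mathbb{R}^k$ be maps such that $G\circ G^\dagger$ is a $\delta$-approximate projector for some $\delta\ge 0$, and let $A\in\mathbb{R}^{m\times n}$ satisfy $REC(R(G),\alpha,\beta)$ with $0<\alpha<\beta$. Fix $x^*\in R(G)$, $y=Ax^*$, $f(x)=\|Ax-y\|_2^2$. For any $x_t\in R(G)$, define $w_t=x_t-\frac{1}{\beta}A^T(Ax_t-y)$ and $x_{t+1}=G(G^\dagger(w_t))$. Then $$f(x_{t+1})\le\Big(\frac{\beta}{\alpha}-1\Big)f(x_t)+\beta\delta.$$
   Context: $R(G)=\{G(z):z\in\mathbb{R}^k\}$ denotes the range of $G$. Restricted Eigenvalue Constraint: for $S\subset\mathbb{R}^n$ and $0<\alpha<\beta$, a matrix $A\in\mathbb{R}^{m\times n}$ satisfies $REC(S,\alpha,\beta)$ if $\alpha\|x_1-x_2\|^2\le\|A(x_1-x_2)\|^2\le\beta\|x_1-x_2\|^2$ for all $x_1,x_2\in S$. $\delta$-approximate projector: the composite map $G\circ G^\dagger:\mathbb{R}^n\to R(G)$ is a $\delta$-approximate projector if for all $x\in\mathbb{R}^n$, $\|x-G(G^\dagger(x))\|^2\le \inf_{z\in\mathbb{R}^k}\|x-G(z)\|^2+\delta$. All norms are Euclidean. *)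

(* Defs.v *)
(* vectors in R^n are column vectors 'cV[R]_n over an
   arbitrary real field R (covers the reals). *)
From HB Require Import structures.
From mathcomp Require Import all_boot all_order all_algebra.
Set Implicit Arguments. Unset Strict Implicit. Unset Printing Implicit Defensive.
Import Order.TTheory GRing.Theory Num.Theory.
Local Open Scope ring_scope.

Definition sqnorm (R : realFieldType) (n : nat) (v : 'cV[R]_n) : R :=
  \sum_(i < n) (v i 0) ^+ 2.

Definition in_range (R : realFieldType) (k n : nat)
  (G : 'cV[R]_k -> 'cV[R]_n) (x : 'cV[R]_n) : Prop :=
  exists z, x = G z.

Definition REC (R : realFieldType) (m n : nat) (S : 'cV[R]_n -> Prop)
  (alpha beta : R) (A : 'M[R]_(m, n)) : Prop :=
  0 < alpha /\ alpha < beta /\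
  forall x1 x2, S x1 -> S x2 ->
    alpha * sqnorm (x1 - x2) <= sqnorm (A *m (x1 - x2)) /\
    sqnorm (A *m (x1 - x2)) <= beta * sqnorm (x1 - x2).

(* G o Gdag is a delta-approximate projector:
   ||x - G(Gdag x)||^2 <= inf_z ||x - G z||^2 + delta, written out as
   "for every z" (equivalent to the infimum formulation). *)
Definition approx_projector (R : realFieldType) (k n : nat)
  (G : 'cV[R]_k -> 'cV[R]_n) (Gdag : 'cV[R]_n -> 'cV[R]_k) (delta : R) : Prop :=
  forall x z, sqnorm (x - G (Gdag x)) <= sqnorm (x - G z) + delta.

(* Main.v *)
Require Import Defs.
From HB Require Import structures.
From mathcomp Require Import all_boot all_order all_algebra.
From mathcomp Require Import ring lra.
Import Order.TTheory GRing.Theory Num.Theory.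
Set Implicit Arguments. Unset Strict Implicit.
Local Open Scope ring_scope.

Section Aux.
Variable R : realFieldType.

Definition dotp (n : nat) (u v : 'cV[R]_n) : R := (u^T *m v) 0 0.

Lemma sqnorm_dot n (v : 'cV[R]_n) : sqnorm v = dotp v v.
Proof.
rewrite /sqnorm /dotp mxE; apply: eq_bigr => i _; by rewrite mxE expr2.
Qed.

Lemma dotpC n (u v : 'cV[R]_n) : dotp u v = dotp v u.
Proof. rewrite /dotp; transitivity ((u^T *m v)^T 0 0); first by rewrite [in RHS]mxE.
by rewrite trmx_mul trmxK. Qed.

Lemma dotpDl n (u v w : 'cV[R]_n) : dotp (u + v) w = dotp u w + dotp v w.
Proof. by rewrite /dotp linearD mulmxDl mxE. Qed.

Lemma dotpNl n (u w : 'cV[R]_n) : dotp (- u) w = - dotp u w.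
Proof. by rewrite /dotp linearN mulNmx mxE. Qed.

Lemma dotpZl n a (u w : 'cV[R]_n) : dotp (a *: u) w = a * dotp u w.
Proof. by rewrite /dotp linearZ -scalemxAl mxE. Qed.

Lemma dotpDr n (u v w : 'cV[R]_n) : dotp w (u + v) = dotp w u + dotp w v.
Proof. by rewrite dotpC dotpDl !(dotpC w). Qed.

Lemma dotpNr n (u w : 'cV[R]_n) : dotp w (- u) = - dotp w u.
Proof. by rewrite dotpC dotpNl dotpC. Qed.

Lemma dotpZr n a (u w : 'cV[R]_n) : dotp w (a *: u) = a * dotp w u.
Proof. by rewrite dotpC dotpZl dotpC. Qed.

Lemma dotp_tr m n (A : 'M[R]_(m, n)) u v :
  dotp (A *m u) v = dotp u (A^T *m v).
Proof. by rewrite /dotp trmx_mul mulmxA. Qed.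

Lemma sqnormD n (u v : 'cV[R]_n) :
  sqnorm (u + v) = sqnorm u + 2 * dotp u v + sqnorm v.
Proof.
rewrite !sqnorm_dot dotpDl !dotpDr (dotpC v u); ring.
Qed.

Lemma sqnormBZ n (u v : 'cV[R]_n) c :
  sqnorm (u - c *: v) = sqnorm u - 2 * c * dotp u v + c ^+ 2 * sqnorm v.
Proof.
rewrite !sqnorm_dot dotpDl !dotpDr !dotpNl !dotpNr !dotpZl !dotpZr (dotpC v u).
ring.
Qed.
Lemma fin_ineq (F P AE bE bQ bD bd bF : R) :
  bE + 2 * P + bQ <= bD - 2 * F + bQ + bd -> bD <= bF -> AE <= bE ->
  F + 2 * P + AE <= bF - F + bd.
Proof. move=> h1 h2 h3. lra. Qed.
End Aux.

Theorem mainTheorem2 (R : realFieldType) (k n m : nat)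
  (G : 'cV[R]_k -> 'cV[R]_n) (Gdag : 'cV[R]_n -> 'cV[R]_k) (delta : R)
  (alpha beta : R) (A : 'M[R]_(m, n)) (xstar xt : 'cV[R]_n) :
  0 <= delta ->
  approx_projector G Gdag delta ->
  REC (in_range G) alpha beta A ->
  in_range G xstar ->
  in_range G xt ->
  let y := A *m xstar in
  let f := fun x : 'cV[R]_n => sqnorm (A *m x - y) in
  let wt := xt - beta^-1 *: (A^T *m (A *m xt - y)) in
  let xt1 := G (Gdag wt) in
  f xt1 <= (beta / alpha - 1) * f xt + beta * delta.
Proof.
move=> hd hP [ha [hab hrec]] hxs hxt /=.
set y := A *m xstar.
set wt := xt - beta^-1 *: (A^T *m (A *m xt - y)).
set xt1 := G (Gdag wt).
pose f := fun x : 'cV[R]_n => sqnorm (A *m x - y).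
rewrite -/(f xt1) -/(f xt).
have hb : 0 < beta by apply: lt_trans hab.
have hx1 : in_range G xt1 by exists (Gdag wt).
have [zs ezs] := hxs.
set d := xt - xstar.
set e := xt1 - xt.
set g := A^T *m (A *m d).
have hAd : A *m xt - y = A *m d by rewrite /y /d mulmxBr.
have hde : xt1 - xstar = d + e by rewrite /d /e [RHS]addrC addrA subrK.
have hf1 : f xt1 = sqnorm (A *m d) + 2 * dotp (A *m d) (A *m e) + sqnorm (A *m e).
  by rewrite /f /y -mulmxBr hde mulmxDr sqnormD.
have hf0 : f xt = sqnorm (A *m d) by rewrite /f hAd.
have [_ hE] := hrec _ _ hx1 hxt.
have [hD _] := hrec _ _ hxt hxs.
have hpr := hP wt zs.
rewrite -ezs -/xt1 in hpr.
have ew1 : wt - xt1 = (- e) - beta^-1 *: g.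
  by rewrite /wt hAd addrAC /e opprB.
have ew2 : wt - xstar = d - beta^-1 *: g.
  by rewrite /wt hAd addrAC.
rewrite ew1 ew2 !sqnormBZ in hpr.
have h1 : dotp d g = sqnorm (A *m d) by rewrite /g -dotp_tr sqnorm_dot.
have h2 : dotp (- e) g = - dotp (A *m d) (A *m e)
  by rewrite dotpNl /g -dotp_tr dotpC.
rewrite h1 h2 in hpr.
rewrite -/e in hE; rewrite -/d in hD.
have hsq : sqnorm (- e) = sqnorm e.
  by rewrite !sqnorm_dot dotpNl dotpNr opprK.
rewrite hsq in hpr.
rewrite hf1 hf0.
set F := sqnorm (A *m d) in hpr hD *.
set P := dotp (A *m d) (A *m e) in hpr *.
set AE := sqnorm (A *m e) in hE *.
set E := sqnorm e in hpr hE *.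
set D := sqnorm d in hpr hD.
set Q := sqnorm g in hpr.
have hbne : beta != 0 by rewrite gt_eqF.
have hane : alpha != 0 by rewrite gt_eqF.
have hm := ler_wpM2l (ltW hb) hpr.
have e1 : beta * (E - 2 * beta^-1 * - P + beta^-1 ^+ 2 * Q)
   = beta * E + 2 * P + beta^-1 * Q by field.
have e2 : beta * (D - 2 * beta^-1 * F + beta^-1 ^+ 2 * Q + delta)
   = beta * D - 2 * F + beta^-1 * Q + beta * delta by field.
rewrite e1 e2 in hm.
have hba : 0 <= beta / alpha by rewrite divr_ge0 // ltW.
have hm2 := ler_wpM2l hba hD.
have e3 : beta / alpha * (alpha * D) = beta * D by field.
rewrite e3 in hm2.
have e4 : (beta / alpha - 1) * F = beta / alpha * F - F by ring.
rewrite e4.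
exact: (fin_ineq hm hm2 hE).
Qed.
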